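(* Let $x\in P$ and $u'\in P'$ with $u'\notin x'^{\perp}$ in $S'$. Then $d(x,u')=3$ in the collinearity graph of $\mathbb{S}$.
   Context: Let $S=(P,L)$ and $S'=(P',L')$ be generalized quadrangles of order $(2,2)$ (every line has 3 points, every point lies on 3 lines, and for each point $x$ and line $l\not\ni x$ exactly one point of $l$ is collinear with $x$), with an isomorphism $x\mapsto x'$ from $S$ to $S'$ (write $u$ for the preimage of $u'\in P'$). In a point-line geometry, $x^{\perp}$ is $x$ together with all points collinear with $x$, and $A^{\perp}=\bigcap_{a\in A}a^{\perp}$. A triad is a set of three pairwise non-collinear points, complete if $|T^{\perp}|=3$. Let $\mathcal{P}=\{(x,y')\in P\times P':y'\in x'^{\perp}\}$ and $\mathcal{L}$ the set of all $3$-subsets $\{(x,u'),(y,v'),(z,w')\}$ of $\mathcal{P}$ where $T=\{x,y,z\}$ (three distinct points) is a line or complete triad of $S$ and $\{u',v',w'\}=T'^{\perp}$ in $S'$ with $u',v',w'$ distinct. The geometry $\mathbb{S}=(\mathbb{P},\mathbb{L})$ has point set $\mathbb{P}=\mathcal{P}\cup P\cup P'$ (disjoint union) and line set $\mathcal{L}\cup\{\{x,(x,u'),u'\}:(x,u')\in\mathcal{P}\}$. *)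

(* Defs.v *)
From mathcomp Require Import all_boot.
Set Implicit Arguments. Unset Strict Implicit. Unset Printing Implicit Defensive.

Section Geometry.
Variable T : finType.

Definition collinear (L : {set {set T}}) (x y : T) : bool :=
  (x != y) && [exists l in L, (x \in l) && (y \in l)].

Definition perp (L : {set {set T}}) (x : T) : {set T} :=
  [set y | (y == x) || collinear L x y].

Definition perpS (L : {set {set T}}) (A : {set T}) : {set T} :=
  \bigcap_(a in A) perp L a.

Definition is_GQ22 (L : {set {set T}}) : Prop :=
  (forall l, l \in L -> #|l| = 3) /\
  (forall x : T, #|[set l in L | x \in l]| = 3) /\
  (forall (x : T) l, l \in L -> x \notin l ->
     #|[set y in l | collinear L x y]| = 1).

Definition triad (L : {set {set T}}) (A : {set T}) : bool :=
  (#|A| == 3) && [forall x in A, forall y in A, ~~ collinear L x y].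

Definition complete_triad (L : {set {set T}}) (A : {set T}) : bool :=
  triad L A && (#|perpS L A| == 3).

Fixpoint walk (adj : rel T) (n : nat) (a b : T) : Prop :=
  match n with
  | 0 => a = b
  | k.+1 => exists c, adj a c /\ walk adj k c b
  end.

Definition gdist_eq (adj : rel T) (a b : T) (n : nat) : Prop :=
  walk adj n a b /\ (forall k, k < n -> ~ walk adj k a b).

End Geometry.

Section BigS.
Variables (P P' : finType) (L : {set {set P}}) (L' : {set {set P'}}) (f : P -> P').

(* point set of the big geometry: (P + P') + (P * P'); only pairs in calP are used *)
Definition Tpt := ((P + P') + (P * P'))%type.

Definition inP (x : P) : Tpt := inl (inl x).
Definition inP' (u : P') : Tpt := inl (inr u).
Definition inPair (x : P) (u : P') : Tpt := inr (x, u).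

Definition in_calP (x : P) (u : P') : bool := u \in perp L' (f x).

Definition line_or_ctriad (A : {set P}) : bool :=
  (A \in L) || complete_triad L A.

Definition is_calL (B : {set Tpt}) : bool :=
  [exists x : P, exists y : P, exists z : P,
   exists u : P', exists v : P', exists w : P',
   [&& x != y, y != z, x != z, u != v, v != w, u != w,
       in_calP x u, in_calP y v, in_calP z w,
       line_or_ctriad [set x; y; z],
       [set u; v; w] == perpS L' (f @: [set x; y; z]) &
       B == [set inPair x u; inPair y v; inPair z w]]].

Definition is_triv_line (B : {set Tpt}) : bool :=
  [exists x : P, exists u : P',
    in_calP x u && (B == [set inP x; inPair x u; inP' u])].

Definition bigL : {set {set Tpt}} :=
  [set B | is_calL B || is_triv_line B].

End BigS.

(* Main.v *)
Require Import Defs.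
From mathcomp Require Import all_boot.

Section Aux.
Variables (P P' : finType) (L : {set {set P}}) (L' : {set {set P'}}) (f : P -> P').

Lemma calL_noP B a : is_calL L L' f B -> inP P' a \notin B.
Proof.
case/existsP=> x; case/existsP=> y; case/existsP=> z; case/existsP=> u;
case/existsP=> v; case/existsP=> w.
case/and4P=> _ _ _ /and4P [_ _ _ /and4P [_ _ _ /and3P [_ _ /eqP ->]]].
by rewrite !inE.
Qed.

Lemma calL_noP' B a : is_calL L L' f B -> inP' P a \notin B.
Proof.
case/existsP=> x; case/existsP=> y; case/existsP=> z; case/existsP=> u;
case/existsP=> v; case/existsP=> w.
case/and4P=> _ _ _ /and4P [_ _ _ /and4P [_ _ _ /and3P [_ _ /eqP ->]]].
by rewrite !inE.
Qed.

Lemma adjP a c : collinear (bigL L L' f) (inP P' a) c ->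
  exists w, in_calP L' f a w /\ (c = inPair a w \/ c = inP' P w).
Proof.
case/andP=> ne /existsP [B /andP [HB /andP [Ha Hc]]].
move: HB; rewrite inE => /orP [HB|HB].
  by move: (calL_noP _ a HB); rewrite Ha.
case/existsP: HB => x0 /existsP [u0 /andP [Hcal /eqP EB]].
move: Ha Hc; rewrite EB !inE => Ha Hc.
have Eax : a = x0.
  by case/orP: Ha => [/orP [/eqP [] //|/eqP //]|/eqP //].
subst x0; exists u0; split=> //.
case/orP: Hc => [/orP [/eqP Hc|/eqP Hc]|/eqP Hc].
- by rewrite Hc eqxx in ne.
- by left.
- by right.
Qed.

Lemma adjP' u c : collinear (bigL L L' f) c (inP' P u) ->
  exists y, in_calP L' f y u /\ (c = inPair y u \/ c = inP P' y).
Proof.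
case/andP=> ne /existsP [B /andP [HB /andP [Hc Ha]]].
move: HB; rewrite inE => /orP [HB|HB].
  by move: (calL_noP' _ u HB); rewrite Ha.
case/existsP: HB => x0 /existsP [u0 /andP [Hcal /eqP EB]].
move: Ha Hc; rewrite EB !inE => Ha Hc.
have Eax : u = u0.
  by case/orP: Ha => [/orP [/eqP //|/eqP //]|/eqP [] //].
subst u0; exists x0; split=> //.
case/orP: Hc => [/orP [/eqP Hc|/eqP Hc]|/eqP Hc].
- by right.
- by left.
- by rewrite Hc eqxx in ne.
Qed.

Lemma triv_adj a w (c d : Tpt P P') : in_calP L' f a w ->
  c \in [set inP P' a; inPair a w; inP' P w] ->
  d \in [set inP P' a; inPair a w; inP' P w] -> c != d ->
  collinear (bigL L L' f) c d.
Proof.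
move=> H Hc Hd ne; apply/andP; split=> //.
apply/existsP; exists [set inP P' a; inPair a w; inP' P w].
rewrite Hc Hd !andbT inE; apply/orP; right.
by rewrite /is_triv_line; apply/existsP; exists a; apply/existsP; exists w; rewrite H eqxx.
Qed.

End Aux.

Theorem lemma4p2 (P P' : finType) (L : {set {set P}}) (L' : {set {set P'}})
  (f : P -> P') :
  is_GQ22 L -> is_GQ22 L' ->
  bijective f -> L' = [set f @: l | l : {set P} in L] ->
  forall (x : P) (u : P'), u \notin perp L' (f x) ->
  gdist_eq (collinear (bigL L L' f)) (inP P' x) (inP' P u) 3.
Proof.
move=> _ [HL1 [HL2 HL3]] [g fg gf] _ x u Hu.
have Hne : u != f x.
  by apply: contraNneq Hu => ->; rewrite inE eqxx.
have Hnc : ~~ collinear L' (f x) u.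
  by apply: contra Hu => H; rewrite inE H orbT.
split.
-
  have : 0 < #|[set l in L' | u \in l]| by rewrite HL2.
  case/card_gt0P => l; rewrite inE => /andP [Hl Hul].
  have Hfx : f x \notin l.
    apply: contra Hnc => Hfl; rewrite /collinear eq_sym Hne /=.
    by apply/existsP; exists l; rewrite Hl Hfl Hul.
  have := HL3 (f x) l Hl Hfx.
  move/eqP/cards1P => [v Ev].
  have : v \in [set y in l | collinear L' (f x) y] by rewrite Ev inE.
  rewrite inE => /andP [Hvl Hcv].
  have Hvu : v != u by apply: contraNneq Hnc => <-.
  have Hcuv : collinear L' u v.
    rewrite /collinear eq_sym Hvu /=.
    by apply/existsP; exists l; rewrite Hl Hul Hvl.
  have Hxv : in_calP L' f x v by rewrite /in_calP inE Hcv orbT.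
  have Hyv : in_calP L' f (g u) v by rewrite /in_calP inE gf Hcuv orbT.
  have Hyu : in_calP L' f (g u) u by rewrite /in_calP inE gf eqxx.
  exists (inP' P v); split.
    by apply: (@triv_adj _ _ L L' f _ _ _ _ Hxv); rewrite ?inE ?eqxx ?orbT.
  exists (inP P' (g u)); split.
    by apply: (@triv_adj _ _ L L' f _ _ _ _ Hyv); rewrite ?inE ?eqxx ?orbT.
  exists (inP' P u); split=> //.
  by apply: (@triv_adj _ _ L L' f _ _ _ _ Hyu); rewrite ?inE ?eqxx ?orbT.
- case=> [|[|[|k]]] // _ /=.
  + move=> [c [H1 H2]]; subst c.
    have [w [Hw [E|E]]] := @adjP _ _ L L' f _ _ H1; first by [].
    case: E => Ew; subst w; by move: Hw; rewrite /in_calP (negbTE Hu).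
  + move=> [c [H1 [d [H2 H3]]]]; subst d.
    have [w [Hw E1]] := @adjP _ _ L L' f _ _ H1.
    have [y [Hy E2]] := @adjP' _ _ L L' f _ _ H2.
    case: E1 E2 => -> [E|E] //.
    by case: E => Ey Ew; subst; move: Hy; rewrite /in_calP (negbTE Hu).
Qed.
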